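(* Assume the linear payoff assumption and the rank condition $\operatorname{rank}\begin{bmatrix}A(\nu^* )\\ B(\mu^* )\end{bmatrix}=d$. Let $\epsilon_1,\epsilon_2>0$ with $\epsilon_1<\min_{a}\mu^*(a)$ and $\epsilon_2<\min_b\nu^*(b)$. Let $\widehat\mu\in\Delta(\mathcal A)$ and $\widehat\nu\in\Delta(\mathcal B)$ satisfy $\mathrm{TV}(\widehat\mu,\mu^* )\le\epsilon_1/2$ and $\mathrm{TV}(\widehat\nu,\nu^* )\le\epsilon_2/2$. Let $$\widehat\theta\in\arg\min_{\theta\in\mathbb{R}^d}\Big\|\begin{bmatrix}A(\widehat\nu)\\ B(\widehat\mu)\end{bmatrix}\theta-\begin{bmatrix}c(\widehat\mu)\\ d(\widehat\nu)\end{bmatrix}\Big\|^2 .$$ Then there exist constants $\epsilon_0,C>0$, depending only on $\phi,\eta,\mu^*,\nu^*$, with the following property. If $\epsilon_1,\epsilon_2\le\epsilon_0$, then the least-squares minimizer is unique and $$\|\widehat\theta-\theta^*\|^2\le C\Big(\epsilon_1^2\big(1+m(\epsilon_2^2+1)\big)+\epsilon_2^2\big(1+n(\epsilon_1^2+1)\big)\Big).$$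
   Context: Let $m,n\ge 2$, $\mathcal A=\{1,\dots,m\}$, $\mathcal B=\{1,\dots,n\}$, and $\eta>0$. For a payoff matrix $Q\in\mathbb{R}^{m\times n}$, the entropy-regularized zero-sum matrix game is $$\max_{\mu\in\Delta(\mathcal A)}\min_{\nu\in\Delta(\mathcal B)}\ \mu^\top Q\nu+\eta^{-1}\mathcal H(\mu)-\eta^{-1}\mathcal H(\nu),\qquad \mathcal H(\pi)=-\sum_i\pi_i\log\pi_i .$$ Its unique saddle point, the quantal response equilibrium (QRE) $(\mu,\nu)$, is characterized by $$\mu(a)=\frac{\exp\big(\eta\sum_b Q(a,b)\nu(b)\big)}{\sum_{a'}\exp\big(\eta\sum_bQ(a',b)\nu(b)\big)},\qquad \nu(b)=\frac{\exp\big(-\eta\sum_a Q(a,b)\mu(a)\big)}{\sum_{b'}\exp\big(-\eta\sum_aQ(a,b')\mu(a)\big)}.$$ Linear payoff assumption: there are a feature map $\phi:\mathcal A\times\mathcal B\to\mathbb{R}^d$ and $\theta^*\in\mathbb{R}^d$ with $\|\theta^*\|^2\le M$ such that $Q(a,b)=\langle\phi(a,b),\theta^*\rangle$ for all $(a,b)$. $(\mu^*,\nu^* )$ denotes the QRE of this $Q$; all its entries are positive. For $\mu\in\Delta(\mathcal A)$ and $\nu\in\Delta(\mathcal B)$ with positive entries, define: - $A(\nu)\in\mathbb{R}^{(m-1)\times d}$, whose row indexed by $a=2,\dots,m$ is $\sum_{b}\nu(b)\,(\phi(a,b)-\phi(1,b))^\top$; - $B(\mu)\in\mathbb{R}^{(n-1)\times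 d}$, whose row indexed by $b=2,\dots,n$ is $\sum_a\mu(a)\,(\phi(a,b)-\phi(a,1))^\top$; - $c(\mu)=\big(\eta^{-1}\log(\mu(a)/\mu(1))\big)_{a=2}^m\in\mathbb{R}^{m-1}$; - $d(\nu)=\big(-\eta^{-1}\log(\nu(b)/\nu(1))\big)_{b=2}^n\in\mathbb{R}^{n-1}$. $\mathrm{TV}(\mu,\mu')=\tfrac12\|\mu-\mu'\|_1$. *)

(* Defs.v *)
From HB Require Import structures.
From mathcomp Require Import all_boot all_order all_algebra.
From mathcomp Require Import reals sequences exp.
Set Implicit Arguments. Unset Strict Implicit. Unset Printing Implicit Defensive.
Import Order.TTheory GRing.Theory Num.Theory.
Local Open Scope ring_scope.

(* Actions are the naturals 1..m (player 1) and 1..n (player 2), as in the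
   paper.  A feature map is phi : nat -> nat -> 'cV[R]_d (only values on
   {1..m} x {1..n} matter); distributions are functions nat -> R (only values
   on the action set matter). *)

Section Defs.
Variable R : realType.

Definition is_dist (m : nat) (mu : nat -> R) : Prop :=
  (forall a, (1 <= a <= m)%N -> 0 <= mu a) /\ \sum_(1 <= a < m.+1) mu a = 1.

Definition pos_dist (m : nat) (mu : nat -> R) : Prop :=
  forall a, (1 <= a <= m)%N -> 0 < mu a.

Definition TV (m : nat) (mu mu' : nat -> R) : R :=
  2^-1 * \sum_(1 <= a < m.+1) `|mu a - mu' a|.

Definition dotv (d : nat) (x y : 'cV[R]_d) : R := \sum_(k < d) x k 0 * y k 0.

Definition sqnorm (p : nat) (x : 'cV[R]_p) : R := \sum_(k < p) x k 0 ^+ 2.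

Definition payoff (d : nat) (phi : nat -> nat -> 'cV[R]_d) (theta : 'cV[R]_d)
  (a b : nat) : R := dotv (phi a b) theta.

Definition is_QRE (m n : nat) (eta : R) (Q : nat -> nat -> R)
  (mu nu : nat -> R) : Prop :=
  (forall a, (1 <= a <= m)%N ->
     mu a = expR (eta * \sum_(1 <= b < n.+1) Q a b * nu b) /
            \sum_(1 <= a' < m.+1) expR (eta * \sum_(1 <= b < n.+1) Q a' b * nu b)) /\
  (forall b, (1 <= b <= n)%N ->
     nu b = expR (- eta * \sum_(1 <= a < m.+1) Q a b * mu a) /
            \sum_(1 <= b' < n.+1) expR (- eta * \sum_(1 <= a < m.+1) Q a b' * mu a)).

(* A(nu) in R^{(m-1) x d}: row i (i = 0..m-2) corresponds to action a = i+2 *)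
Definition Amat (m n d : nat) (phi : nat -> nat -> 'cV[R]_d) (nu : nat -> R)
  : 'M[R]_(m.-1, d) :=
  \matrix_(i < m.-1, k < d)
     \sum_(1 <= b < n.+1) nu b * (phi i.+2 b k 0 - phi 1%N b k 0).

(* B(mu) in R^{(n-1) x d}: row j (j = 0..n-2) corresponds to action b = j+2 *)
Definition Bmat (m n d : nat) (phi : nat -> nat -> 'cV[R]_d) (mu : nat -> R)
  : 'M[R]_(n.-1, d) :=
  \matrix_(j < n.-1, k < d)
     \sum_(1 <= a < m.+1) mu a * (phi a j.+2 k 0 - phi a 1%N k 0).

Definition cvec (m : nat) (eta : R) (mu : nat -> R) : 'cV[R]_(m.-1) :=
  \col_(i < m.-1) (eta^-1 * ln (mu i.+2 / mu 1%N)).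

Definition dvec (n : nat) (eta : R) (nu : nat -> R) : 'cV[R]_(n.-1) :=
  \col_(j < n.-1) (- eta^-1 * ln (nu j.+2 / nu 1%N)).

Definition is_lsq_min (p d : nat) (M : 'M[R]_(p, d)) (y : 'cV[R]_p)
  (theta : 'cV[R]_d) : Prop :=
  forall theta' : 'cV[R]_d,
    sqnorm (M *m theta - y) <= sqnorm (M *m theta' - y).

End Defs.

(* Main.v *)
Require Import Defs.
From HB Require Import structures.
From mathcomp Require Import all_boot all_order all_algebra.
From mathcomp Require Import reals sequences exp.
From mathcomp Require Import ring lra zify.
Import Order.TTheory GRing.Theory Num.Theory.
Local Open Scope ring_scope.
Section Aux.
Local Set Implicit Arguments. Local Unset Strict Implicit.
Variable R : realType.

Lemma sqnorm_ge0 p (x : 'cV[R]_p) : 0 <= sqnorm x.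
Proof. by rewrite /sqnorm; apply: sumr_ge0 => i _; apply: sqr_ge0. Qed.

Lemma sqnorm_eq0 p (x : 'cV[R]_p) : sqnorm x <= 0 -> x = 0.
Proof.
move=> h; have /eqP h0 : sqnorm x == 0 by rewrite eq_le h sqnorm_ge0.
apply/matrixP => i j; rewrite ord1 mxE.
move/eqP: h0; rewrite /sqnorm psumr_eq0 => [/allP H|]; last by move=> *; apply: sqr_ge0.
by have := H i (mem_index_enum i); rewrite /= sqrf_eq0 => /eqP.
Qed.

Lemma sqnormN p (x : 'cV[R]_p) : sqnorm (- x) = sqnorm x.
Proof. by apply: eq_bigr => i _; rewrite mxE sqrrN. Qed.

Lemma sqnormD2 p (x y : 'cV[R]_p) : sqnorm (x + y) <= 2 * sqnorm x + 2 * sqnorm y.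
Proof.
rewrite /sqnorm !mulr_sumr -big_split /=; apply: ler_sum => i _; rewrite mxE.
rewrite -subr_ge0.
have -> : 2 * x i 0 ^+ 2 + 2 * y i 0 ^+ 2 - (x i 0 + y i 0) ^+ 2 = (x i 0 - y i 0) ^+ 2 by ring.
exact: sqr_ge0.
Qed.

Lemma sqnorm_col_mx p q (u : 'cV[R]_p) (v : 'cV[R]_q) :
  sqnorm (col_mx u v) = sqnorm u + sqnorm v.
Proof.
rewrite /sqnorm big_split_ord /=; congr (_ + _); apply: eq_bigr => i _.
  by rewrite col_mxEu. by rewrite col_mxEd.
Qed.

Definition frob {p d : nat} (A : 'M[R]_(p, d)) := \sum_(i < p) \sum_(k < d) A i k ^+ 2.

Lemma frob_ge0 p d (A : 'M[R]_(p, d)) : 0 <= frob A.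
Proof. by apply: sumr_ge0 => i _; apply: sumr_ge0 => k _; apply: sqr_ge0. Qed.

Lemma frob_col_mx p q d (A : 'M[R]_(p, d)) (B : 'M[R]_(q, d)) :
  frob (col_mx A B) = frob A + frob B.
Proof.
rewrite /frob big_split_ord /=; congr (_ + _); apply: eq_bigr => i _;
  apply: eq_bigr => k _. by rewrite col_mxEu. by rewrite col_mxEd.
Qed.

Lemma cauchy_schwarz {d : nat} (a b : 'I_d -> R) :
  (\sum_(k < d) a k * b k) ^+ 2 <= (\sum_(k < d) a k ^+ 2) * (\sum_(k < d) b k ^+ 2).
Proof.
set t := \sum_(k < d) a k ^+ 2; set s := \sum_(k < d) a k * b k.
set u := \sum_(k < d) b k ^+ 2.
have t0 : 0 <= t by apply: sumr_ge0 => k _; apply: sqr_ge0.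
have key : 0 <= t * (t * u - s ^+ 2).
  have -> : t * (t * u - s ^+ 2) = \sum_(k < d) (t * b k - s * a k) ^+ 2.
    rewrite (eq_bigr (fun k => t ^+ 2 * b k ^+ 2 - (2 * t * s) * (a k * b k)
       + s ^+ 2 * a k ^+ 2)); last by move=> k _; ring.
    rewrite big_split /= sumrB -!mulr_sumr -/t -/s -/u; ring.
  by apply: sumr_ge0 => k _; apply: sqr_ge0.
have [tz|tp] := eqVneq t 0.
  have ha : forall k, a k = 0.
    move=> k; move: tz => /eqP; rewrite /t psumr_eq0; last by move=> *; apply: sqr_ge0.
    by move=> /allP /(_ k (mem_index_enum k)) /=; rewrite sqrf_eq0 => /eqP.
  rewrite /s big1 ?expr0n ?mul0r //; last by move=> k _; rewrite ha mul0r.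
  by rewrite mulr_ge0 // sumr_ge0 // => k _; apply: sqr_ge0.
have tp' : 0 < t by rewrite lt_def tp t0.
by move: key; rewrite pmulr_rge0 // subr_ge0.
Qed.

Lemma sqnorm_mulmx p d (A : 'M[R]_(p, d)) (x : 'cV[R]_d) :
  sqnorm (A *m x) <= frob A * sqnorm x.
Proof.
rewrite /sqnorm /frob mulr_suml; apply: ler_sum => i _; rewrite mxE.
exact: (cauchy_schwarz (fun k => A i k) (fun k => x k 0)).
Qed.

Lemma left_inv p d (G : 'M[R]_(p, d)) : \rank G = d -> pinvmx G *m G = 1%:M.
Proof.
move=> h; have hf : row_full G by rewrite /row_full h.
by rewrite -{1}[pinvmx G]mul1mx mulmxKpV // submx_full.
Qed.

Lemma rank_lb p d (G : 'M[R]_(p, d)) (x : 'cV[R]_d) :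
  \rank G = d -> sqnorm x <= frob (pinvmx G) * sqnorm (G *m x).
Proof.
move=> h; rewrite -{1}[x]mul1mx -(left_inv h) -mulmxA; exact: sqnorm_mulmx.
Qed.

Lemma perturb_lb p d (G H : 'M[R]_(p, d)) K :
  (forall x, sqnorm x <= K * sqnorm (G *m x)) -> 0 <= K ->
  2 * K * frob (G - H) <= 2^-1 ->
  forall x, sqnorm x <= 4 * K * sqnorm (H *m x).
Proof.
move=> hK K0 hs x.
have e : G *m x = H *m x + (G - H) *m x by rewrite mulmxBl addrC subrK.
have h1 := hK x; rewrite e in h1.
have h2 := ler_wpM2l K0 (sqnormD2 (H *m x) ((G - H) *m x)).
have h3 := ler_wpM2l K0 (sqnorm_mulmx (G - H) x).
have h4 := ler_wpM2r (sqnorm_ge0 x) hs.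
lra.
Qed.

Lemma lsq_bound p d (H : 'M[R]_(p, d)) y th ths K :
  (forall x, sqnorm x <= K * sqnorm (H *m x)) -> 0 <= K ->
  is_lsq_min H y th -> sqnorm (th - ths) <= 4 * K * sqnorm (y - H *m ths).
Proof.
move=> hK K0 hmin.
have h1 := hK (th - ths).
have e : H *m (th - ths) = (H *m th - y) + (y - H *m ths).
  by rewrite mulmxBr addrA subrK.
rewrite e in h1.
have h2 := ler_wpM2l K0 (sqnormD2 (H *m th - y) (y - H *m ths)).
have h3 := hmin ths; rewrite -[sqnorm (H *m ths - y)]sqnormN opprB in h3.
have h4 := ler_wpM2l K0 h3.
lra.
Qed.

Lemma lsq_unique p d (H : 'M[R]_(p, d)) y t1 t2 K :
  (forall x, sqnorm x <= K * sqnorm (H *m x)) ->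
  is_lsq_min H y t1 -> is_lsq_min H y t2 -> t1 = t2.
Proof.
move=> hK h1 h2.
set mid := 2^-1 *: (t1 + t2).
have par : sqnorm (H *m t1 - y) + sqnorm (H *m t2 - y) =
   2 * sqnorm (H *m mid - y) + 2^-1 * sqnorm (H *m (t1 - t2)).
  rewrite /mid -scalemxAr mulmxDr mulmxBr /sqnorm !mulr_sumr -!big_split /=.
  apply: eq_bigr => i _; rewrite !mxE; by field.
have g1 := h1 mid; have g2 := h2 mid.
have g3 := sqnorm_ge0 (H *m (t1 - t2)).
have z : sqnorm (H *m (t1 - t2)) = 0 by lra.
have := hK (t1 - t2); rewrite z mulr0 => /sqnorm_eq0 /eqP.
by rewrite subr_eq0 => /eqP.
Qed.

Lemma sum_nat_ge0 (f : nat -> R) n :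
  (forall c, (1 <= c <= n)%N -> 0 <= f c) -> 0 <= \sum_(1 <= c < n.+1) f c.
Proof.
move=> hf; rewrite big_seq_cond; apply: sumr_ge0 => c /andP[].
by rewrite mem_index_iota => hc _; apply: hf; lia.
Qed.

Lemma le_sum_nat_term (f : nat -> R) n b :
  (forall c, (1 <= c <= n)%N -> 0 <= f c) -> (1 <= b <= n)%N ->
  f b <= \sum_(1 <= c < n.+1) f c.
Proof.
elim: n => [|n IH] hf hb; first by lia.
rewrite big_nat_recr /=; last by [].
have [->|hne] := eqVneq b n.+1.
  rewrite lerDr; apply: sum_nat_ge0 => c hc; apply: hf; lia.
have h1 : f b <= \sum_(1 <= c < n.+1) f c.
  by apply: IH => [c hc|]; [apply: hf; lia | lia].
have h2 : 0 <= f n.+1 by apply: hf; lia.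
lra.
Qed.

Lemma exists_lb (f : nat -> R) n :
  (forall a, (1 <= a <= n)%N -> 0 < f a) ->
  exists c, 0 < c /\ forall a, (1 <= a <= n)%N -> c <= f a.
Proof.
elim: n => [|n IH] hf; first by exists 1; split => // a; lia.
have [c [c0 hc]] : exists c, 0 < c /\ forall a, (1 <= a <= n)%N -> c <= f a.
  by apply: IH => a ha; apply: hf; lia.
exists (Num.min c (f n.+1)); split.
  by rewrite lt_min c0 hf //; lia.
move=> a ha; have [->|ne] := eqVneq a n.+1; rewrite ge_min ?lexx ?orbT //.
by rewrite hc //; lia.
Qed.

Lemma ln_lip (x y c : R) : 0 < c -> c <= x -> c <= y -> `|ln x - ln y| <= `|x - y| / c.
Proof.
move=> c0 cx cy.
have x0 : 0 < x by apply: lt_le_trans cx.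
have y0 : 0 < y by apply: lt_le_trans cy.
have gen : forall u v : R, c <= u -> c <= v -> 0 < u -> 0 < v ->
    ln u - ln v <= `|u - v| / c.
  move=> u v cu cv u0 v0.
  rewrite -ln_div ?posrE //.
  have -> : u / v = 1 + (u - v) / v by field; rewrite gt_eqF.
  apply: le_trans (le_ln1Dx _) _.
    have uv : 0 < u / v by rewrite divr_gt0.
    have -> : (u - v) / v = u / v - 1 by field; rewrite gt_eqF.
    lra.
  apply: le_trans (ler_norm _) _.
  rewrite normrM normfV (gtr0_norm v0).
  apply: (ler_wpM2l (normr_ge0 (u - v))).
  by rewrite lef_pV2 ?posrE.
rewrite ler_norml; apply/andP; split.
  by rewrite lerNl opprB distrC; apply: gen.
exact: gen.
Qed.

End Aux.
Section Main.
Local Set Implicit Arguments. Local Unset Strict Implicit.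
Variable R : realType.

Lemma sq_le (x y : R) : `|x| <= y -> x ^+ 2 <= y ^+ 2.
Proof.
move=> h; have h0 := normr_ge0 x.
rewrite -[x ^+ 2]real_normK ?num_real //.
have h1 : 0 <= y - `|x| by rewrite subr_ge0.
have h2 : 0 <= y + `|x| by lra.
rewrite -subr_ge0.
have -> : y ^+ 2 - `|x| ^+ 2 = (y - `|x|) * (y + `|x|) by ring.
exact: mulr_ge0.
Qed.

Lemma Amat_mul m n d (phi : nat -> nat -> 'cV[R]_d) th nu (i : 'I_m.-1) :
  (Amat m n phi nu *m th) i 0 =
  \sum_(1 <= b < n.+1) payoff phi th i.+2 b * nu b
  - \sum_(1 <= b < n.+1) payoff phi th 1%N b * nu b.
Proof.
rewrite mxE (eq_bigr (fun k => \sum_(1 <= b < n.+1)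
   nu b * (phi i.+2 b k 0 - phi 1%N b k 0) * th k 0)); last first.
  by move=> k _; rewrite mxE mulr_suml.
rewrite exchange_big -sumrB /=; apply: eq_bigr => b _.
rewrite /payoff /dotv !mulr_suml -sumrB; apply: eq_bigr => k _; ring.
Qed.

Lemma Bmat_mul m n d (phi : nat -> nat -> 'cV[R]_d) th mu (j : 'I_n.-1) :
  (Bmat m n phi mu *m th) j 0 =
  \sum_(1 <= a < m.+1) payoff phi th a j.+2 * mu a
  - \sum_(1 <= a < m.+1) payoff phi th a 1%N * mu a.
Proof.
rewrite mxE (eq_bigr (fun k => \sum_(1 <= a < m.+1)
   mu a * (phi a j.+2 k 0 - phi a 1%N k 0) * th k 0)); last first.
  by move=> k _; rewrite mxE mulr_suml.
rewrite exchange_big -sumrB /=; apply: eq_bigr => a _.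
rewrite /payoff /dotv !mulr_suml -sumrB; apply: eq_bigr => k _; ring.
Qed.

Lemma qre_c m n (eta : R) (Q : nat -> nat -> R) (mu nu : nat -> R) (i : 'I_m.-1) :
  (2 <= m)%N -> 0 < eta -> is_QRE m n eta Q mu nu -> pos_dist m mu ->
  cvec m eta mu i 0 = \sum_(1 <= b < n.+1) Q i.+2 b * nu b
                      - \sum_(1 <= b < n.+1) Q 1%N b * nu b.
Proof.
move=> hm he [hmu _] hpos; rewrite mxE.
have ha : (1 <= i.+2 <= m)%N by have := ltn_ord i; lia.
have h1 : (1 <= 1 <= m)%N by lia.
have hp := hpos 1%N h1; rewrite (hmu 1%N h1) in hp.
rewrite (hmu _ ha) (hmu _ h1).
move: hp.
set Z := \sum_(1 <= a' < m.+1) expR (eta * \sum_(1 <= b < n.+1) Q a' b * nu b).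
move=> hp.
have Z0 : Z != 0 by apply/eqP => z; move: hp; rewrite z invr0 mulr0 ltxx.
set Sa := \sum_(1 <= b < n.+1) Q i.+2 b * nu b.
set S1 := \sum_(1 <= b < n.+1) Q 1%N b * nu b.
have -> : expR (eta * Sa) / Z / (expR (eta * S1) / Z) = expR (eta * Sa - eta * S1).
  rewrite expRD expRN; field; by rewrite Z0 expR_eq0.
rewrite expRK; field; exact: lt0r_neq0.
Qed.

Lemma qre_d m n (eta : R) (Q : nat -> nat -> R) (mu nu : nat -> R) (j : 'I_n.-1) :
  (2 <= n)%N -> 0 < eta -> is_QRE m n eta Q mu nu -> pos_dist n nu ->
  dvec n eta nu j 0 = \sum_(1 <= a < m.+1) Q a j.+2 * mu a
                      - \sum_(1 <= a < m.+1) Q a 1%N * mu a.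
Proof.
move=> hn he [_ hnu] hpos; rewrite mxE.
have ha : (1 <= j.+2 <= n)%N by have := ltn_ord j; lia.
have h1 : (1 <= 1 <= n)%N by lia.
have hp := hpos 1%N h1; rewrite (hnu 1%N h1) in hp.
rewrite (hnu _ ha) (hnu _ h1).
move: hp.
set Z := \sum_(1 <= b' < n.+1) expR (- eta * \sum_(1 <= a < m.+1) Q a b' * mu a).
move=> hp.
have Z0 : Z != 0 by apply/eqP => z; move: hp; rewrite z invr0 mulr0 ltxx.
set Sa := \sum_(1 <= a < m.+1) Q a j.+2 * mu a.
set S1 := \sum_(1 <= a < m.+1) Q a 1%N * mu a.
have -> : expR (- eta * Sa) / Z / (expR (- eta * S1) / Z) = expR (- eta * Sa - - eta * S1).
  rewrite expRD expRN; field; by rewrite Z0 expR_eq0.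
rewrite expRK; field; exact: lt0r_neq0.
Qed.


Lemma sum_diff_bound (x x' D : nat -> R) n (e : R) :
  \sum_(1 <= b < n.+1) `|x b - x' b| <= e ->
  (\sum_(1 <= b < n.+1) x b * D b - \sum_(1 <= b < n.+1) x' b * D b) ^+ 2 <=
  e ^+ 2 * (\sum_(1 <= b < n.+1) `|D b|) ^+ 2.
Proof.
move=> he; rewrite -exprMn; apply: sq_le.
rewrite -sumrB.
apply: le_trans (ler_norm_sum _ _ _) _.
have S0 : 0 <= \sum_(1 <= b < n.+1) `|D b| by apply: sumr_ge0 => *; apply: normr_ge0.
have key : \sum_(1 <= b < n.+1) `|x b * D b - x' b * D b| <=
   (\sum_(1 <= b < n.+1) `|x b - x' b|) * \sum_(1 <= c < n.+1) `|D c| :> R.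
  rewrite mulr_suml big_seq_cond [X in _ <= X]big_seq_cond.
  apply: ler_sum => b /andP[]; rewrite mem_index_iota => hb _.
  rewrite -mulrBl normrM; apply: (ler_wpM2l (normr_ge0 (x b - x' b))).
  by apply: le_sum_nat_term => [c _|]; [exact: normr_ge0 | lia].
apply: le_trans key _. have := ler_wpM2r S0 he. move=> /= H. exact H.
Qed.

Definition KA m n d (phi : nat -> nat -> 'cV[R]_d) : R :=
  \sum_(i < m.-1) \sum_(k < d)
     (\sum_(1 <= b < n.+1) `|phi i.+2 b k 0 - phi 1%N b k 0|) ^+ 2.
Definition KB m n d (phi : nat -> nat -> 'cV[R]_d) : R :=
  \sum_(j < n.-1) \sum_(k < d)
     (\sum_(1 <= a < m.+1) `|phi a j.+2 k 0 - phi a 1%N k 0|) ^+ 2.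

Lemma KA_ge0 m n d (phi : nat -> nat -> 'cV[R]_d) : 0 <= KA m n phi.
Proof. by apply: sumr_ge0 => i _; apply: sumr_ge0 => k _; apply: sqr_ge0. Qed.
Lemma KB_ge0 m n d (phi : nat -> nat -> 'cV[R]_d) : 0 <= KB m n phi.
Proof. by apply: sumr_ge0 => i _; apply: sumr_ge0 => k _; apply: sqr_ge0. Qed.

Lemma Amat_frob m n d (phi : nat -> nat -> 'cV[R]_d) nu nu' e :
  \sum_(1 <= b < n.+1) `|nu b - nu' b| <= e ->
  frob (Amat m n phi nu - Amat m n phi nu') <= e ^+ 2 * KA m n phi.
Proof.
move=> he; rewrite /frob /KA mulr_sumr; apply: ler_sum => i _.
rewrite mulr_sumr; apply: ler_sum => k _; rewrite !mxE.
exact: (sum_diff_bound (fun b => phi i.+2 b k 0 - phi 1%N b k 0) he).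
Qed.

Lemma Bmat_frob m n d (phi : nat -> nat -> 'cV[R]_d) mu mu' e :
  \sum_(1 <= a < m.+1) `|mu a - mu' a| <= e ->
  frob (Bmat m n phi mu - Bmat m n phi mu') <= e ^+ 2 * KB m n phi.
Proof.
move=> he; rewrite /frob /KB mulr_sumr; apply: ler_sum => i _.
rewrite mulr_sumr; apply: ler_sum => k _; rewrite !mxE.
exact: (sum_diff_bound (fun a => phi a i.+2 k 0 - phi a 1%N k 0) he).
Qed.

Lemma logratio_diff (u v u' v' c e : R) :
  0 < c -> c <= u -> c <= v -> c <= u' -> c <= v' ->
  `|u - u'| <= e -> `|v - v'| <= e ->
  `|ln (u / v) - ln (u' / v')| <= 2 * e / c.
Proof.
move=> c0 cu cv cu' cv' hu hv.
have p : forall z, c <= z -> z \in Num.pos by move=> z cz; rewrite posrE (lt_le_trans c0 cz).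
rewrite !ln_div ?p //.
have -> : ln u - ln v - (ln u' - ln v') = (ln u - ln u') - (ln v - ln v') by ring.
apply: le_trans (ler_normB _ _) _.
have h1 := ln_lip c0 cu cu'; have h2 := ln_lip c0 cv cv'.
have ci : 0 <= c^-1 by rewrite invr_ge0 ltW.
have h3 := ler_wpM2r ci hu; have h4 := ler_wpM2r ci hv.
rewrite /= in h1 h2 h3 h4.
have -> : 2 * e / c = e * c^-1 + e * c^-1 by rewrite /= mulr2n; ring.
lra.
Qed.

Lemma cvec_diff m (eta : R) (mu mu' : nat -> R) (e c : R) :
  0 < eta -> 0 < c -> (forall a, (1 <= a <= m)%N -> c <= mu a) ->
  (forall a, (1 <= a <= m)%N -> c <= mu' a) ->
  (forall a, (1 <= a <= m)%N -> `|mu a - mu' a| <= e) ->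
  sqnorm (cvec m eta mu - cvec m eta mu') <= m.-1%:R * (2 / (eta * c)) ^+ 2 * e ^+ 2.
Proof.
move=> he c0 hc hc' hd.
have -> : m.-1%:R * (2 / (eta * c)) ^+ 2 * e ^+ 2 = \sum_(i < m.-1) (2 / (eta * c) * e) ^+ 2.
  by rewrite sumr_const card_ord -mulr_natl; ring.
rewrite /sqnorm; apply: ler_sum => i _; apply: sq_le; rewrite !mxE -mulrBr normrM gtr0_norm ?invr_gt0 //.
have ha : (1 <= i.+2 <= m)%N by have := ltn_ord i; lia.
have h1 : (1 <= 1 <= m)%N by have := ltn_ord i; lia.
have := logratio_diff c0 (hc _ ha) (hc _ h1) (hc' _ ha) (hc' _ h1) (hd _ ha) (hd _ h1).
move=> h.
have ei : 0 <= eta^-1 by rewrite invr_ge0 ltW.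
apply: le_trans (ler_wpM2l ei h) _.
have -> : eta^-1 * (2 * e / c) = 2 / (eta * c) * e.
  by field; rewrite !lt0r_neq0.
by [].
Qed.

Lemma dvec_diff n (eta : R) (nu nu' : nat -> R) (e c : R) :
  0 < eta -> 0 < c -> (forall a, (1 <= a <= n)%N -> c <= nu a) ->
  (forall a, (1 <= a <= n)%N -> c <= nu' a) ->
  (forall a, (1 <= a <= n)%N -> `|nu a - nu' a| <= e) ->
  sqnorm (dvec n eta nu - dvec n eta nu') <= n.-1%:R * (2 / (eta * c)) ^+ 2 * e ^+ 2.
Proof.
move=> he c0 hc hc' hd.
have -> : n.-1%:R * (2 / (eta * c)) ^+ 2 * e ^+ 2 = \sum_(i < n.-1) (2 / (eta * c) * e) ^+ 2.
  by rewrite sumr_const card_ord -mulr_natl; ring.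
rewrite /sqnorm; apply: ler_sum => i _; apply: sq_le; rewrite !mxE.
rewrite -mulrBr normrM normrN [`|eta^-1|]gtr0_norm ?invr_gt0 //.
have ha : (1 <= i.+2 <= n)%N by have := ltn_ord i; lia.
have h1 : (1 <= 1 <= n)%N by have := ltn_ord i; lia.
have := logratio_diff c0 (hc _ ha) (hc _ h1) (hc' _ ha) (hc' _ h1) (hd _ ha) (hd _ h1).
move=> h.
have ei : 0 <= eta^-1 by rewrite invr_ge0 ltW.
apply: le_trans (ler_wpM2l ei h) _.
have -> : eta^-1 * (2 * e / c) = 2 / (eta * c) * e.
  by field; rewrite !lt0r_neq0.
by [].
Qed.
End Main.
Theorem mainTheorem2 (R : realType) (m n d : nat) (eta M : R)
  (phi : nat -> nat -> 'cV[R]_d) (theta_star : 'cV[R]_d)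
  (mu_star nu_star : nat -> R) :
  (2 <= m)%N -> (2 <= n)%N -> 0 < eta ->
  sqnorm theta_star <= M ->
  is_dist m mu_star -> is_dist n nu_star ->
  is_QRE m n eta (payoff phi theta_star) mu_star nu_star ->
  pos_dist m mu_star -> pos_dist n nu_star ->
  \rank (col_mx (Amat m n phi nu_star) (Bmat m n phi mu_star)) = d ->
  exists eps0 C : R, 0 < eps0 /\ 0 < C /\
    forall (eps1 eps2 : R) (mu_hat nu_hat : nat -> R),
      0 < eps1 -> 0 < eps2 ->
      (forall a, (1 <= a <= m)%N -> eps1 < mu_star a) ->
      (forall b, (1 <= b <= n)%N -> eps2 < nu_star b) ->
      is_dist m mu_hat -> is_dist n nu_hat ->
      TV m mu_hat mu_star <= eps1 / 2 ->
      TV n nu_hat nu_star <= eps2 / 2 ->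
      eps1 <= eps0 -> eps2 <= eps0 ->
      forall theta_hat : 'cV[R]_d,
        is_lsq_min (col_mx (Amat m n phi nu_hat) (Bmat m n phi mu_hat))
                   (col_mx (cvec m eta mu_hat) (dvec n eta nu_hat)) theta_hat ->
        (forall theta : 'cV[R]_d,
           is_lsq_min (col_mx (Amat m n phi nu_hat) (Bmat m n phi mu_hat))
                      (col_mx (cvec m eta mu_hat) (dvec n eta nu_hat)) theta ->
           theta = theta_hat) /\
        sqnorm (theta_hat - theta_star) <=
          C * (eps1 ^+ 2 * (1 + m%:R * (eps2 ^+ 2 + 1))
               + eps2 ^+ 2 * (1 + n%:R * (eps1 ^+ 2 + 1))).
Proof.
move=> hm hn heta hM hdmu hdnu hqre hpmu hpnu hrank.
have [c1 [c10 hc1]] := exists_lb hpmu.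
have [c2 [c20 hc2]] := exists_lb hpnu.
set Gs := col_mx (Amat m n phi nu_star) (Bmat m n phi mu_star).
set fP := frob (pinvmx Gs).
have fP0 : 0 <= fP := frob_ge0 _.
set KAc := KA m n phi. set KBc := KB m n phi.
have KA0 : 0 <= KAc := KA_ge0 _ _ _.
have KB0 : 0 <= KBc := KB_ge0 _ _ _.
set L := fP * (KAc + KBc).
have L0 : 0 <= L by rewrite mulr_ge0 // addr_ge0.
set k1 := (2 / (eta * (c1 / 2))) ^+ 2. set k2 := (2 / (eta * (c2 / 2))) ^+ 2.
set Kc := m.-1%:R * k1. set Kd := n.-1%:R * k2.
have Kc0 : 0 <= Kc by rewrite mulr_ge0 // sqr_ge0.
have Kd0 : 0 <= Kd by rewrite mulr_ge0 // sqr_ge0.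
set st := sqnorm theta_star.
have st0 : 0 <= st := sqnorm_ge0 _.
set K1 := 2 * (Kc + Kd) + 2 * (KAc + KBc) * st.
have K10 : 0 <= K1.
  by rewrite addr_ge0 // ?mulr_ge0 // ?addr_ge0.
set q := (4 * L + 1)^-1.
have q0 : 0 < q by rewrite invr_gt0; lra.
have hq : (4 * L + 1) * q = 1 by rewrite mulfV //; apply: lt0r_neq0; lra.
exists (Num.min (Num.min (c1 / 2) (c2 / 2)) (Num.min 1 q)), (16 * fP * K1 + 1).
split.
  by rewrite !lt_min !divr_gt0 ?c10 ?c20 ?q0 ?ltr01.
split.
  have : 0 <= 16 * fP * K1 by rewrite !mulr_ge0.
  lra.
move=> e1 e2 muh nuh e10 e20 hlb1 hlb2 hdmuh hdnuh htv1 htv2 he1 he2 th hth.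
move: he1; rewrite !le_min => /andP[/andP[e1c1 e1c2] /andP[e11 e1q]].
move: he2; rewrite !le_min => /andP[/andP[e2c1 e2c2] /andP[e21 e2q]].
have sum1 : \sum_(1 <= a < m.+1) `|muh a - mu_star a| <= e1 by move: htv1; rewrite /TV; lra.
have sum2 : \sum_(1 <= b < n.+1) `|nuh b - nu_star b| <= e2 by move: htv2; rewrite /TV; lra.
have pt1 : forall a, (1 <= a <= m)%N -> `|muh a - mu_star a| <= e1.
  move=> a ha; apply: le_trans sum1.
  by apply: (le_sum_nat_term (f := fun a => `|muh a - mu_star a|)) => // c _; apply: normr_ge0.
have pt2 : forall b, (1 <= b <= n)%N -> `|nuh b - nu_star b| <= e2.
  move=> b hb; apply: le_trans sum2.
  by apply: (le_sum_nat_term (f := fun b => `|nuh b - nu_star b|)) => // c _; apply: normr_ge0.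
have lbh1 : forall a, (1 <= a <= m)%N -> c1 / 2 <= muh a.
  move=> a ha; have := pt1 a ha; have := hc1 a ha; rewrite ler_norml; lra.
have lbs1 : forall a, (1 <= a <= m)%N -> c1 / 2 <= mu_star a.
  move=> a ha; have := hc1 a ha; lra.
have lbh2 : forall b, (1 <= b <= n)%N -> c2 / 2 <= nuh b.
  move=> b hb; have := pt2 b hb; have := hc2 b hb; rewrite ler_norml; lra.
have lbs2 : forall b, (1 <= b <= n)%N -> c2 / 2 <= nu_star b.
  move=> b hb; have := hc2 b hb; lra.
have c1h : 0 < c1 / 2 by rewrite divr_gt0.
have c2h : 0 < c2 / 2 by rewrite divr_gt0.
have hcd := cvec_diff heta c1h lbh1 lbs1 pt1.
have hdd := dvec_diff heta c2h lbh2 lbs2 pt2.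
rewrite -/k1 -/Kc in hcd. rewrite -/k2 -/Kd in hdd.
set Gh := col_mx (Amat m n phi nuh) (Bmat m n phi muh).
have sum2' : \sum_(1 <= b < n.+1) `|nu_star b - nuh b| <= e2.
  by rewrite (eq_bigr (fun b => `|nuh b - nu_star b|)) // => b _; rewrite distrC.
have sum1' : \sum_(1 <= a < m.+1) `|mu_star a - muh a| <= e1.
  by rewrite (eq_bigr (fun a => `|muh a - mu_star a|)) // => a _; rewrite distrC.
have hfro : frob (Gs - Gh) <= e2 ^+ 2 * KAc + e1 ^+ 2 * KBc.
  rewrite /Gs /Gh opp_col_mx add_col_mx frob_col_mx.
  have := Amat_frob m phi sum2'; have := Bmat_frob n phi sum1'.
  rewrite -/KAc -/KBc; lra.
have sq1 : e1 ^+ 2 <= q.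
  rewrite expr2 -[q]mul1r; apply: ler_pM => //; exact: ltW.
have sq2 : e2 ^+ 2 <= q.
  rewrite expr2 -[q]mul1r; apply: ler_pM => //; exact: ltW.
have hsmall : 2 * fP * frob (Gs - Gh) <= 2^-1.
  have t1 : frob (Gs - Gh) <= q * (KAc + KBc).
    have := ler_wpM2r KA0 sq2; have := ler_wpM2r KB0 sq1; lra.
  have t2 := ler_wpM2l (mulr_ge0 (ler0n _ 2) fP0) t1.
  apply: le_trans t2 _.
  have -> : 2 * fP * (q * (KAc + KBc)) = 2 * (q * L) by rewrite /L; ring.
  have h4 : 4 * (q * L) = 1 - q by move: hq; lra.
  lra.
have hK : forall x, sqnorm x <= fP * sqnorm (Gs *m x).
  by move=> x; apply: rank_lb.
have hK' := perturb_lb hK fP0 hsmall.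
split.
  by move=> th' hth'; apply: (lsq_unique hK' hth' hth).
have K40 : 0 <= 4 * fP by rewrite mulr_ge0.
have hb := lsq_bound theta_star hK' K40 hth.
set ys := col_mx (cvec m eta mu_star) (dvec n eta nu_star).
set yh := col_mx (cvec m eta muh) (dvec n eta nuh).
have Fy : Gs *m theta_star = ys.
  rewrite /Gs /ys mul_col_mx; congr col_mx; apply/matrixP => i j; rewrite ord1.
    by rewrite Amat_mul (qre_c _ hm heta hqre hpmu).
  by rewrite Bmat_mul (qre_d _ hn heta hqre hpnu).
have er : yh - Gh *m theta_star = (yh - ys) + (Gs - Gh) *m theta_star.
  by rewrite mulmxBl Fy addrA subrK.
have hy : sqnorm (yh - ys) <= Kc * e1 ^+ 2 + Kd * e2 ^+ 2.
  rewrite /yh /ys opp_col_mx add_col_mx sqnorm_col_mx; lra.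
have hr1 := sqnormD2 (yh - ys) ((Gs - Gh) *m theta_star).
have hr2 := sqnorm_mulmx (Gs - Gh) theta_star.
rewrite -/st in hr2. rewrite -er in hr1.
have hr3 := ler_wpM2r st0 hfro.
set E := e1 ^+ 2 + e2 ^+ 2.
have E1 : e1 ^+ 2 <= E by rewrite /E lerDl sqr_ge0.
have E2 : e2 ^+ 2 <= E by rewrite /E lerDr sqr_ge0.
have a1 := ler_wpM2l Kc0 E1. have a2 := ler_wpM2l Kd0 E2.
have a3 := ler_wpM2l (mulr_ge0 KA0 st0) E2.
have a4 := ler_wpM2l (mulr_ge0 KB0 st0) E1.
have hr : sqnorm (yh - Gh *m theta_star) <= K1 * E.
  rewrite /K1; lra.
have b1 := ler_wpM2l (mulr_ge0 (ler0n _ 16) fP0) hr.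
set P := e1 ^+ 2 * (1 + m%:R * (e2 ^+ 2 + 1)) + e2 ^+ 2 * (1 + n%:R * (e1 ^+ 2 + 1)).
have EP : E <= P.
  have p1 : 0 <= e1 ^+ 2 * (m%:R * (e2 ^+ 2 + 1)).
    apply: mulr_ge0; [exact: sqr_ge0| apply: mulr_ge0; [exact: ler0n | apply: addr_ge0; [exact: sqr_ge0 | exact: ler01]]].
  have p2 : 0 <= e2 ^+ 2 * (n%:R * (e1 ^+ 2 + 1)).
    apply: mulr_ge0; [exact: sqr_ge0| apply: mulr_ge0; [exact: ler0n | apply: addr_ge0; [exact: sqr_ge0 | exact: ler01]]].
  have -> : P = E + e1 ^+ 2 * (m%:R * (e2 ^+ 2 + 1)) + e2 ^+ 2 * (n%:R * (e1 ^+ 2 + 1)).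
    by rewrite /P /E; ring.
  lra.
have C0 : 0 <= 16 * fP * K1 + 1 by rewrite addr_ge0 // !mulr_ge0.
have b2 := ler_wpM2l C0 EP.
have E0 : 0 <= E by rewrite addr_ge0 ?sqr_ge0.
have b3 : 0 <= 16 * fP * K1 * E by rewrite !mulr_ge0.
lra.
Qed.
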